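(* Let $G$ be a connected graph of order $n_G$ and let $H$ be a connected subgraph of $G$ of order $n_H$. Then for each integer $k$ with $3\le k\le n_H$ we have $px_k(G)\le px_k(H)+n_G-n_H$, and for each integer $k$ with $n_H\le k\le n_G$ we have $px_k(G)\le px_{n_H}(H)+n_G-n_H$.
   Context: All graphs are finite, simple and undirected. An edge-coloring of a graph assigns colors to edges, adjacent edges being allowed to share a color. A tree $T$ in an edge-colored graph is a proper tree if no two adjacent edges of $T$ receive the same color. For a connected graph $G$ of order $n$, an integer $k$ with $2\le k\le n$ and a set $S\subseteq V(G)$, an $S$-tree is a tree in $G$ containing all vertices of $S$. An edge-coloring of $G$ is a $k$-proper coloring if for every $k$-element subset $S\subseteq V(G)$ there is a proper $S$-tree in $G$. The $k$-proper index $px_k(G)$ is the minimum number of colors in a $k$-proper coloring of $G$. *)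

(* Defs.v *)
From mathcomp Require Import all_boot.
From mathcomp Require Import boolp.
Set Implicit Arguments. Unset Strict Implicit. Unset Printing Implicit Defensive.

Definition simple_graph (T : finType) (V : {set T}) (adj : rel T) : Prop :=
  (forall x y, adj x y = adj y x) /\ (forall x, ~~ adj x x) /\
  (forall x y, adj x y -> (x \in V) && (y \in V)).

Definition connected_graph (T : finType) (V : {set T}) (adj : rel T) : Prop :=
  V != set0 /\ forall x y, x \in V -> y \in V -> connect adj x y.

(* Edges are unordered pairs {x,y}; an edge-coloring is a map c from
   2-subsets to colors. It uses (at most) m colors if every edge of the
   graph gets a color in {0,..,m-1}. *)
Definition coloring_with (T : finType) (adj : rel T) (c : {set T} -> nat) (m : nat) : Prop :=
  forall x y, adj x y -> c [set x; y] < m.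

Definition is_tree (T : finType) (V : {set T}) (adj : rel T)
    (W : {set T}) (F : {set {set T}}) : Prop :=
  [/\ W != set0, W \subset V,
      (forall e, e \in F -> exists x y, [/\ e = [set x; y], adj x y, x \in W & y \in W]),
      (forall x y, x \in W -> y \in W ->
          connect (fun u v => [set u; v] \in F) x y)
    & #|F| = #|W| - 1].

Definition proper_edges (T : finType) (c : {set T} -> nat) (F : {set {set T}}) : Prop :=
  forall e1 e2, e1 \in F -> e2 \in F -> e1 != e2 -> e1 :&: e2 != set0 -> c e1 != c e2.

Definition k_proper (T : finType) (V : {set T}) (adj : rel T) (k : nat)
    (c : {set T} -> nat) : Prop :=
  forall S : {set T}, S \subset V -> #|S| = k ->
    exists W F, [/\ is_tree V adj W F, S \subset W & proper_edges c F].

Definition k_proper_with (T : finType) (V : {set T}) (adj : rel T) (k m : nat) : Prop :=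
  exists c, coloring_with adj c m /\ k_proper V adj k c.

Lemma ex_asbool_helper (P : nat -> Prop) : (exists m, P m) -> exists m, `[< P m >].
Proof. by case=> m Pm; exists m; apply: asboolT. Qed.

(* px_k(V,adj): the minimum number of colors of a k-proper coloring
   (0 by convention if there is none, which does not occur for connected graphs). *)
Definition px (T : finType) (V : {set T}) (adj : rel T) (k : nat) : nat :=
  match pselect (exists m, k_proper_with V adj k m) with
  | left h => ex_minn (ex_asbool_helper h)
  | right _ => 0
  end.

(* Main.v *)
Require Import Defs.
From mathcomp Require Import all_boot boolp.
From mathcomp Require Import zify.
Set Implicit Arguments. Unset Strict Implicit. Unset Printing Implicit Defensive.

Section S.
Variable T : finType.
Implicit Types (V W S : {set T}) (F : {set {set T}}) (adj : rel T).

Definition PP V adj (c : {set T} -> nat) (j B : nat) :=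
 forall S, S \subset V -> #|S| <= j -> exists W F,
   [/\ is_tree V adj W F, S \subset W, proper_edges c F & forall e, e \in F -> c e < B].

Lemma tree_edge_sub V adj W F e : is_tree V adj W F -> e \in F -> e \subset W.
Proof.
case=> _ _ He _ _ /He [x [y [-> _ xW yW]]]; apply/subsetP=> z.
by rewrite !inE => /orP[]/eqP->.
Qed.

Lemma tree_sub V V' adj W F : V \subset V' -> is_tree V adj W F -> is_tree V' adj W F.
Proof.
move=> sV [h1 h2 h3 h4 h5]; split=> //; exact: subset_trans sV.
Qed.

Lemma tree_adj V (a a' : rel T) W F : (forall x y, a x y -> a' x y) -> is_tree V a W F -> is_tree V a' W F.
Proof.
move=> sa [h1 h2 h3 h4 h5]; split=> // e /h3 [x [y [-> axy xW yW]]].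
by exists x, y; split=> //; apply: sa.
Qed.

Lemma add_leaf V adj W F v w : is_tree V adj W F -> v \notin V -> w \in W -> adj w v ->
  is_tree (v |: V) adj (v |: W) ([set w; v] |: F).
Proof.
move=> tr vV wW awv; have [h1 h2 h3 h4 h5] := tr.
have vW : v \notin W by apply: contra vV; apply: (subsetP h2).
have eF : [set w; v] \notin F.
  apply/negP=> /(tree_edge_sub tr) /subsetP /(_ v); rewrite !inE eqxx orbT => /(_ isT).
  by rewrite (negbTE vW).
have sub : forall x y, connect (fun u z => [set u; z] \in F) x y ->
    connect (fun u z => [set u; z] \in [set w; v] |: F) x y.
  apply: connect_sub => u z Huz; apply: connect1; by rewrite in_setU1 Huz orbT.
have cwv : connect (fun u z => [set u; z] \in [set w; v] |: F) w v.
  by apply: connect1; rewrite setU11.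
have cvw : connect (fun u z => [set u; z] \in [set w; v] |: F) v w.
  apply: connect1; have -> : [set v; w] = [set w; v].
    by apply/setP=> z; rewrite !inE orbC.
  by rewrite setU11.
split.
- by apply/set0Pn; exists v; rewrite setU11.
- by apply: setUS.
- move=> e; rewrite in_setU1 => /orP[/eqP->|/h3 [x [y [-> axy xW yW]]]].
    by exists w, v; rewrite !inE eqxx wW orbT.
  by exists x, y; rewrite !inE xW yW !orbT.
- move=> x y; rewrite !in_setU1 => /orP[/eqP->|xW] /orP[/eqP->|yW].
  + exact: connect0.
  + by apply: connect_trans cvw (sub _ _ (h4 _ _ wW yW)).
  + by apply: connect_trans (sub _ _ (h4 _ _ xW wW)) cwv.
  + exact: sub (h4 _ _ xW yW).
- rewrite cardsU1 vW (cardsU1 [set w; v] F) eF h5.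
  have : 0 < #|W| by rewrite card_gt0.
  lia.
Qed.


Lemma pad n V (A : {set T}) : A \subset V -> #|A| + n <= #|V| ->
  exists S, [/\ A \subset S, S \subset V & #|S| = #|A| + n].
Proof.
elim: n A => [|n IH] A sAV hc; first by exists A; rewrite addn0.
have : ~~ (V \subset A).
  apply/negP=> sVA; have : #|V| <= #|A| by apply: subset_leq_card. lia.
case/subsetPn=> x xV xA.
have [||S [h1 h2 h3]] := IH (x |: A).
- by rewrite subUset sub1set xV.
- by rewrite cardsU1 xA; lia.
exists S; split=> //; first exact: subset_trans (subsetUr _ _) h1.
by rewrite h3 cardsU1 xA; lia.
Qed.

Lemma crossing (e : rel T) x y V : connect e x y -> x \in V -> y \notin V ->
  exists u z, [/\ u \in V, z \notin V & e u z].
Proof.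
case/connectP=> p; elim: p x => [|z p IH] x /= => [_ -> ->|/andP[exz pz] ly xV yV]; first by [].
case zV: (z \in V).
- exact: IH pz ly zV yV.
- by exists x, z; rewrite zV.
Qed.

Lemma step V adj c j B v w : PP V adj c j B -> v \notin V -> w \in V -> adj w v ->
  PP (v |: V) adj (fun e => if e == [set w; v] then B else c e) j B.+1.
Proof.
move=> P vV wV awv S sS hS.
have good : forall W F, is_tree V adj W F -> proper_edges c F -> (forall e, e \in F -> c e < B) ->
   [/\ proper_edges (fun e => if e == [set w; v] then B else c e) F,
       forall e, e \in F -> (if e == [set w; v] then B else c e) < B.+1 &
       forall e, e \in F -> e != [set w; v]].
  move=> W F tr pr cB.
  have nF : forall e, e \in F -> e != [set w; v].
    move=> e eF; apply/negP=> /eqP ee; move: (tree_edge_sub tr eF); rewrite ee.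
    case: tr => _ /subsetP sW _ _ _ /subsetP /(_ v); rewrite !inE eqxx orbT => /(_ isT) /sW.
    by rewrite (negbTE vV).
  split=> //.
  - move=> e1 e2 h1 h2; rewrite (negbTE (nF _ h1)) (negbTE (nF _ h2)); exact: pr.
  - by move=> e eF; rewrite (negbTE (nF _ eF)) ltnS ltnW ?cB.
case vS: (v \in S).
- have sS' : w |: (S :\ v) \subset V.
    rewrite subUset sub1set wV /=; apply/subsetP=> x; rewrite !inE => /andP[xv xS].
    by move: (subsetP sS x xS); rewrite !inE (negbTE xv).
  have hS' : #|w |: (S :\ v)| <= j.
    move: (cardsD1 v S) (cardsU1 w (S :\ v)); rewrite vS; lia.
  have [W [F [tr sW pr cB]]] := P _ sS' hS'.
  have wW : w \in W by apply: (subsetP sW); rewrite setU11.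
  have vW : v \notin W by apply: contra vV; move=> vW; case: tr => _ /subsetP sWV _ _ _; exact: sWV.
  exists (v |: W), ([set w; v] |: F); split.
  + exact: add_leaf.
  + apply/subsetP=> x xS; rewrite in_setU1; case: (eqVneq x v) => //= xv.
    by apply: (subsetP sW); rewrite !inE xv xS orbT.
  + have [pr' cB' nF] := good _ _ tr pr cB.
    move=> e1 e2; rewrite !in_setU1 => /orP[/eqP->|h1] /orP[/eqP->|h2].
    * by rewrite eqxx.
    * rewrite eqxx (negbTE (nF _ h2)) => _ _; move: (cB _ h2); lia.
    * rewrite eqxx (negbTE (nF _ h1)) => _ _; move: (cB _ h1); lia.
    * exact: pr'.
  + move=> e; rewrite in_setU1 => /orP[/eqP->|eF]; first by rewrite eqxx.
    have [_ cB' _] := good _ _ tr pr cB; exact: cB'.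
- have sS' : S \subset V.
    apply/subsetP=> x xS; move: (subsetP sS x xS); rewrite in_setU1.
    case: eqP => [xv|_ //]; by move: xS; rewrite xv vS.
  have [W [F [tr sW pr cB]]] := P _ sS' hS.
  have [pr' cB' _] := good _ _ tr pr cB.
  exists W, F; split=> //; apply: tree_sub tr; exact: subsetUr.
Qed.


Lemma grow (U : {set T}) adj : (forall x y, adj x y -> y \in U) ->
  (forall x y, x \in U -> y \in U -> connect adj x y) ->
  forall n V c j B, V \subset U -> V != set0 -> #|U| - #|V| = n -> PP V adj c j B ->
  exists c', PP U adj c' j (B + n).
Proof.
move=> cl cn; elim=> [|n IH] V c j B sVU V0 hn P.
  have eVU : V = U.
    apply/eqP; rewrite eqEcard sVU /=.
    have : #|V| <= #|U| by apply: subset_leq_card. lia.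
  by exists c; rewrite addn0 -eVU.
have : ~~ (U \subset V).
  apply/negP=> sUV; have : #|U| <= #|V| by apply: subset_leq_card. lia.
case/subsetPn=> y yU yV.
have [x xV] := set0Pn _ V0.
have [u [z [uV zV auz]]] := crossing (cn x y (subsetP sVU x xV) yU) xV yV.
have [||| c' P'] := IH (z |: V) _ j B.+1 _ _ _ (step P zV uV auz).
- by rewrite subUset sub1set (cl _ _ auz).
- by apply/set0Pn; exists z; rewrite setU11.
- by rewrite cardsU1 zV; lia.
by exists c'; rewrite addnS -addSn.
Qed.

Lemma finish V adj c j B k : 0 < B -> PP V adj c j B -> k <= j -> k_proper_with V adj k B.
Proof.
move=> B0 P kj; exists (fun e => if c e < B then c e else 0); split.
  by move=> x y _; case: ifP.
move=> S sS hS; have [|W [F [tr sW pr cB]]] := P S sS; first by rewrite hS.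
exists W, F; split=> // e1 e2 h1 h2; rewrite (cB _ h1) (cB _ h2); exact: pr.
Qed.

Lemma px_min V adj k m : k_proper_with V adj k m -> px V adj k <= m.
Proof.
move=> km; rewrite /px; case: pselect => [hex|nex]; last by exfalso; apply: nex; exists m.
case: ex_minnP => m0 _ Hmin; apply: Hmin; exact/asboolP.
Qed.

Lemma px_ok V adj k : (exists m, k_proper_with V adj k m) -> k_proper_with V adj k (px V adj k).
Proof.
move=> ex; rewrite /px; case: pselect => [hex|nex]; last by [].
by case: ex_minnP => m0 /asboolP.
Qed.

Lemma kpw_PP V adj k m : k <= #|V| -> k_proper_with V adj k m -> exists c, PP V adj c k m.
Proof.
move=> kV [c [col kp]]; exists c => S sS hS.
have [|S2 [h1 h2 h3]] := pad (n:=k - #|S|) sS; first by lia.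
have [W [F [tr sW pr]]] := kp S2 h2 (etrans h3 (subnKC hS)).
exists W, F; split=> //; first exact: subset_trans h1 sW.
move=> e eF; case: tr => _ _ he _ _; have [x [y [-> axy _ _]]] := he e eF; exact: col.
Qed.

Lemma PP_up V adj c j B : PP V adj c #|V| B -> PP V adj c j B.
Proof. by move=> P S sS _; apply: P => //; apply: subset_leq_card. Qed.

Lemma PP_adj V (a a' : rel T) c j B : (forall x y, a x y -> a' x y) -> PP V a c j B -> PP V a' c j B.
Proof.
move=> sa P S sS hS; have [W [F [tr sW pr cB]]] := P S sS hS.
by exists W, F; split=> //; apply: tree_adj tr.
Qed.

Lemma PP_B V adj c j B B' : B <= B' -> PP V adj c j B -> PP V adj c j B'.
Proof.
move=> BB P S sS hS; have [W [F [tr sW pr cB]]] := P S sS hS.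
by exists W, F; split=> // e eF; apply: leq_trans (cB e eF) BB.
Qed.

Lemma PP_pos V adj c j B : PP V adj c j B -> 2 <= j -> 2 <= #|V| -> 0 < B.
Proof.
move=> P j2 V2; have [|S [_ sV hS]] := pad (n:=2) (sub0set V); first by rewrite cards0.
have [|W [F [tr sW pr cB]]] := P S sV; first by rewrite hS cards0.
have : #|S| <= #|W| by apply: subset_leq_card.
case: tr => _ _ _ _ h5; rewrite hS cards0 => hW.
have : F != set0 by rewrite -card_gt0 h5; lia.
by case/set0Pn=> e /cB; lia.
Qed.

Lemma PP_single x adj c j : PP [set x] adj c j 0.
Proof.
move=> S sS _; exists [set x], set0; split=> //.
- split.
  + by apply/set0Pn; exists x; rewrite set11.
  + by [].
  + by move=> e; rewrite in_set0.
  + by move=> y z; rewrite !inE => /eqP-> /eqP->; apply: connect0.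
  + by rewrite cards0 cards1.
- by move=> e1; rewrite in_set0.
- by move=> e; rewrite in_set0.
Qed.


Lemma core (g : rel T) (VH : {set T}) (h : rel T) j jg k :
  simple_graph [set: T] g -> connected_graph [set: T] g ->
  simple_graph VH h -> connected_graph VH h ->
  (forall x y, h x y -> g x y) ->
  2 <= j <= #|VH| -> (jg = j \/ j = #|VH|) -> k <= jg ->
  px [set: T] g k <= px VH h j + (#|T| - #|VH|).
Proof.
move=> _ [_ cG] [_ [_ sH]] [H0 cH] hg /andP[j2 jV] hjg kjg.
have ex : exists m, k_proper_with VH h j m.
  have [x xV] := set0Pn _ H0.
  have [||||c' P'] := grow (U:=VH) (adj:=h) _ cH (n:=#|VH| - 1) (V:=[set x]) (c:=fun _ => 0) (j:=j) (B:=0) _ _ _ (@PP_single x h (fun _ => 0) j).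
  - by move=> u z /sH /andP[].
  - by rewrite sub1set.
  - by apply/set0Pn; exists x; rewrite set11.
  - by rewrite cards1.
  exists (#|VH| - 1).+1; apply: finish (PP_B (B':=(#|VH| - 1).+1) _ P') (leqnn j) => //; lia.
have [c P] := kpw_PP jV (px_ok ex).
have m0 : 0 < px VH h j by apply: (PP_pos P j2); exact: leq_trans j2 jV.
have P2 : PP VH h c jg (px VH h j).
  by case: hjg => [->|jE]; [exact: P | apply: PP_up; rewrite -jE].
have [||c' P'] := grow (U:=[set: T]) (adj:=g) _ _ (n:=#|[set: T]| - #|VH|) (subsetT VH) H0 (erefl _) (PP_adj hg P2).
- by move=> *; rewrite in_setT.
- by move=> x y _ _; apply: cG; rewrite in_setT.
rewrite -cardsT; apply: px_min; apply: finish P' kjg; lia.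
Qed.

End S.

Theorem lemma2p9 (T : finType) (g : rel T) (VH : {set T}) (h : rel T) :
  simple_graph [set: T] g -> connected_graph [set: T] g ->
  simple_graph VH h -> connected_graph VH h ->
  (forall x y, h x y -> g x y) ->
  (forall k, 3 <= k <= #|VH| ->
     px [set: T] g k <= px VH h k + (#|T| - #|VH|)) /\
  (2 <= #|VH| -> forall k, #|VH| <= k <= #|T| ->
     px [set: T] g k <= px VH h #|VH| + (#|T| - #|VH|)).
Proof.
move=> sG cG sH cH hg; split.
- move=> k /andP[k3 kV]; apply: (core (jg:=k)) => //; [|by left]; apply/andP; split=> //; lia.
- move=> V2 k /andP[Vk kT]; apply: (core (jg:=#|T|)) => //; [|by right].
  by rewrite V2 leqnn.
Qed.
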